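(* Let $0\to N\xrightarrow{i} G\to Q\to 1$ be a short exact sequence of groups with $N$ abelian (written additively), and let $Z^1(G,N)$ be the abelian group of crossed homomorphisms $\phi:G\to N$ (i.e. $\phi(x+y)=\phi(x)+x\cdot\phi(y)$). For $\phi,\psi\in Z^1(G,N)$ define $(\phi\diamond\psi)(x):=\phi(i(\psi(x)))$. Then $\phi\diamond\psi\in Z^1(G,N)$.
   Context: $G$ acts on $N$ by conjugation, $x\cdot n=x+n-x$. $Z^1(G,N)$ is an abelian group under pointwise addition. *)

(* Defs.v *)
From HB Require Import structures.
From mathcomp Require Import all_boot all_algebra.
From mathcomp Require Import monoid.
Set Implicit Arguments. Unset Strict Implicit. Unset Printing Implicit Defensive.

(* G, Q : (possibly infinite, nonabelian) groups, written multiplicatively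
   (mathcomp's [groupType]); N : abelian group written additively ([zmodType]). *)

Definition short_exact (N : zmodType) (G Q : groupType)
    (i : N -> G) (p : G -> Q) : Prop :=
  [/\ (forall a b : N, i (a + b)%R = (i a * i b)%g),
      (forall x y : G, p (x * y)%g = (p x * p y)%g),
      injective i,
      (forall q : Q, exists x : G, p x = q)
    & (forall x : G, p x = 1%g <-> exists n : N, i n = x)].

Definition is_conj_action (N : zmodType) (G : groupType)
    (i : N -> G) (act : G -> N -> N) : Prop :=
  forall (x : G) (n : N), i (act x n) = (x * i n * x^-1)%g.

Definition crossed_hom (N : zmodType) (G : groupType)
    (act : G -> N -> N) (phi : G -> N) : Prop :=
  forall x y : G, phi (x * y)%g = (phi x + act x (phi y))%R.

Definition diamond (N : zmodType) (G : groupType) (i : N -> G)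
    (phi psi : G -> N) : G -> N :=
  fun x => phi (i (psi x)).

(* Main.v *)
Require Import Defs.
From HB Require Import structures.
From mathcomp Require Import all_boot all_algebra.
From mathcomp Require Import monoid.
Import GRing.Theory.

Theorem lemma6 (N : zmodType) (G Q : groupType) (i : N -> G) (p : G -> Q)
    (act : G -> N -> N) (phi psi : G -> N) :
  short_exact i p ->
  is_conj_action i act ->
  crossed_hom act phi ->
  crossed_hom act psi ->
  crossed_hom act (diamond i phi psi).
Proof.
move=> [iD _ iinj _ _] hact hphi hpsi x y; rewrite /diamond.
have actD : forall g a b, act g (a + b)%R = (act g a + act g b)%R.
  move=> g a b; apply: iinj; rewrite iD !hact iD.
  by rewrite !mulgA; congr (_ * _)%g; rewrite -(mulgA _ (g^-1)%g) mulVg mulg1.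
have acti : forall n m, act (i n) m = m.
  move=> n m; apply: iinj; rewrite hact -iD addrC iD mulgK //.
have phi1 : phi 1%g = 0%R.
  have := hphi 1%g 1%g; rewrite mulg1.
  have -> : act 1%g (phi 1%g) = phi 1%g.
    by apply: iinj; rewrite hact invg1 mulg1 mul1g.
  by move=> h; have := congr1 (fun z => (z - phi 1%g)%R) h; rewrite /= addrK subrr => ->.
have phiV : (phi x + act x (phi (x^-1)%g))%R = 0%R by rewrite -hphi mulgV.
rewrite hpsi iD hact hphi acti -mulgA !hphi acti !actD addrA.
by rewrite -!addrA; congr (_ + _)%R; rewrite addrCA phiV addr0.
Qed.
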